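(* Let $0 < 1/r_1 \ll \tau, 1/K$ where $\tau<1$, $K\ge1$ and $1-\tau-7\tau^{1/4}/K>0$. If $\mathcal H$ is an $n$-vertex linear hypergraph in which every edge $e$ satisfies $|e|\ge r_1$, then there is a linear ordering $\preceq$ of the edges of $\mathcal H$ such that at least one of the following holds. (a) Every $e\in\mathcal H$ satisfies $d^{\preceq}(e)\le(1-\tau)n$. (b) There is a set $W\subseteq\mathcal H$ such that (W1) $\max_{e\in W}|e| \le (1+3\tau^{1/4}K^4)\min_{e\in W}|e|$ and (W2) $\mathrm{vol}(W) \ge \frac{(1-\tau-7\tau^{1/4}/K)^2}{1+3\tau^{1/4}K^4}$; moreover, if $e^*$ is the last edge of $W$ in $\preceq$, then (O1) every $f\in\mathcal H$ with $e^*\preceq f$ and $f\ne e^*$ satisfies $d^{\preceq}(f)\le(1-\tau)n$, and (O2) for all $e,f\in\mathcal H$ with $f\preceq e\preceq e^*$ we have $|f|\ge|e|$.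
   Context: A hypergraph has a finite vertex set and a set of nonempty edges; linear means any two distinct edges share at most one vertex. For an edge $e$, $N(e)$ is the set of edges $f\ne e$ with $f\cap e\ne\varnothing$. Given a linear ordering $\preceq$ of the edges (reflexive), $d^{\preceq}(e)$ is the number of $f\in N(e)$ with $f\preceq e$. The normalised volume of a set $W$ of edges of an $n$-vertex hypergraph is $\mathrm{vol}(W)=\sum_{e\in W}\binom{|e|}{2}/\binom n2$. Hierarchy: $0<1/r_1\ll\tau,1/K$ means the statement holds whenever $r_1$ is sufficiently large as a function of $\tau$ and $K$. *)

(* Defs.v *)
From HB Require Import structures.
From mathcomp Require Import all_boot all_order all_algebra.
From mathcomp Require Export reals.
Set Implicit Arguments. Unset Strict Implicit. Unset Printing Implicit Defensive.
Import Order.TTheory GRing.Theory Num.Theory.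
Local Open Scope ring_scope.

Definition hypergraph (T : finType) (E : {set {set T}}) : Prop :=
  forall e, e \in E -> e != set0.

Definition linear_hg (T : finType) (E : {set {set T}}) : Prop :=
  forall e f, e \in E -> f \in E -> e != f -> (#|e :&: f| <= 1)%N.

(* A linear ordering of the edges of E, represented by a duplicate-free
   enumeration s of E; f ⪯ e iff index f s <= index e s. *)
Definition edge_ordering (T : finType) (E : {set {set T}}) (s : seq {set T}) : Prop :=
  uniq s /\ s =i E.

Definition preceq (T : finType) (s : seq {set T}) (f e : {set T}) : bool :=
  (index f s <= index e s)%N.

Definition nbhd (T : finType) (E : {set {set T}}) (e : {set T}) : {set {set T}} :=
  [set f in E | (f != e) && (f :&: e != set0)].

Definition dprec (T : finType) (E : {set {set T}}) (s : seq {set T}) (e : {set T}) : nat :=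
  #|[set f in nbhd E e | preceq s f e]|.

Definition vol (R : realType) (T : finType) (W : {set {set T}}) : R :=
  (\sum_(e in W) ('C(#|e|, 2))%:R) / ('C(#|T|, 2))%:R.

(* Main.v *)
Require Import Defs.
From HB Require Import structures.
From mathcomp Require Import all_boot all_order all_algebra.
From mathcomp Require Import reals.
From mathcomp Require Import zify ring lra.
Import Order.TTheory GRing.Theory Num.Theory.

Module Helpers.
Set Implicit Arguments. Unset Strict Implicit. Unset Printing Implicit Defensive.

Section Comb.
Variables (T : finType) (E : {set {set T}}).
Hypothesis lin : linear_hg E.

Lemma pair1 (v x : T) : v != x -> (#|[set g in E | (v \in g) && (x \in g)]| <= 1)%N.
Proof.
move=> vx; rewrite leqNgt; apply/negP => /card_gt1P [g [h [Hg Hh gh]]].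
move: Hg Hh; rewrite !inE => /andP [gE /andP [vg xg]] /andP [hE /andP [vh xh]].
have := lin gE hE gh; apply/negP; rewrite -ltnNge.
apply: (@leq_trans #|[set v; x]|); first by rewrite cards2 vx.
apply: subset_leq_card.
by apply/subsetP => y; rewrite !inE => /orP [] /eqP ->; rewrite ?vg ?vh ?xg ?xh.
Qed.

Lemma cardE_sum (X : finType) (A : {set X}) : #|A| = (\sum_x (x \in A : nat))%N.
Proof. by rewrite -sum1_card big_mkcond; apply: eq_bigr => x _; case: (x \in A). Qed.

Lemma sum_ind (f : {set T}) (S : {set {set T}}) (P : pred {set T}) :
  (forall g, g \in S -> P g -> g :&: f != set0) ->
  (#|[set g in S | P g]| <= \sum_(v in f) #|[set g in S | P g && (v \in g)]|)%N.
Proof.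
move=> H.
have -> : (\sum_(v in f) #|[set g in S | P g && (v \in g)]| =
   \sum_(g in [set g in S | P g]) \sum_(v in f) (v \in g))%N.
  rewrite [RHS]exchange_big /=; apply: eq_bigr => v _.
  rewrite -sum1_card big_mkcond [RHS]big_mkcond /=; apply: eq_bigr => g _.
  by rewrite !inE; case: (g \in S); case: (P g); case: (v \in g).
rewrite -sum1_card; apply: leq_sum => g; rewrite inE => /andP [gS Pg].
have /set0Pn [v] := H g gS Pg; rewrite inE => /andP [vg vf].
by rewrite (bigD1 v) //= vg.
Qed.

Lemma Pcount (S : {set {set T}}) (f : {set T}) (x : T) : S \subset E -> x \notin f ->
  (#|[set g in S | (g :&: f != set0) && (x \in g)]| <= #|f|)%N.
Proof.
move=> SE xf.
have := @sum_ind f S (fun g => (g :&: f != set0) && (x \in g)).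
move=> /(_ (fun g _ H => proj1 (andP H))) /leq_trans; apply.
rewrite -[#|f|]sum1_card; apply: leq_sum => v vf.
apply: leq_trans (pair1 (v := v) (x := x) _); last by apply: contraNneq xf => <-.
apply: subset_leq_card; apply/subsetP => g; rewrite !inE.
by case/andP=> gS /andP [/andP [_ ->] ->]; rewrite (subsetP SE).
Qed.

Lemma sumA (S : {set {set T}}) (f : {set T}) : S \subset E ->
  (forall g, g \in S -> g :&: f != set0) ->
  (\sum_(g in S) #|g :\: f| <= #|f| * #|T|)%N.
Proof.
move=> SE Hf.
have -> : (\sum_(g in S) #|g :\: f| =
   \sum_x #|[set g in S | (g :&: f != set0) && (x \in g) && (x \notin f)]|)%N.
  under eq_bigr => g gS do rewrite cardE_sum.
  rewrite exchange_big /=; apply: eq_bigr => x _; rewrite cardE_sum big_mkcond /=.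
  by apply: eq_bigr => g _; rewrite !inE; case gS: (g \in S); rewrite //= Hf //=; by rewrite andbC.
rewrite mulnC -[#|T|]sum1_card big_distrl /=; apply: leq_sum => x _.
rewrite mul1n; case xf: (x \in f).
  by rewrite (_ : [set _ in _ | _] = set0) ?cards0 //; apply/setP => g; rewrite !inE !andbF.
apply: leq_trans (Pcount SE (negbT xf)); apply: subset_leq_card.
by apply/subsetP => g; rewrite !inE => /andP [-> /andP [->]].
Qed.

Lemma star (S : {set {set T}}) (u : T) : S \subset E ->
  (\sum_(g in S | u \in g) #|g :\ u| <= #|T|)%N.
Proof.
move=> SE.
have -> : (\sum_(g in S | u \in g) #|g :\ u| =
   \sum_x #|[set g in S | (u \in g) && (x \in g) && (x != u)]|)%N.
  under eq_bigr => g gS do rewrite cardE_sum.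
  rewrite exchange_big /=; apply: eq_bigr => x _; rewrite cardE_sum big_mkcond /=.
  by apply: eq_bigr => g _; rewrite !inE; case gS: (g \in S); case: (u \in g); rewrite //= andbC.
rewrite -[#|T|]sum1_card; apply: leq_sum => x _.
case xu: (x == u).
  by rewrite (_ : [set _ in _ | _] = set0) ?cards0 //; apply/setP => g; rewrite !inE !andbF.
apply: leq_trans (pair1 (v := u) (x := x) _); last by rewrite eq_sym xu.
apply: subset_leq_card; apply/subsetP => g; rewrite !inE.
by case/andP=> gS /andP [/andP [-> ->] _]; rewrite (subsetP SE).
Qed.

End Comb.

Lemma bin2x2 n : ('C(n, 2) * 2 = n * n.-1)%N.
Proof.
elim: n => [|n IH] //; rewrite binS mulnDl IH bin1 /=.
by case: n {IH} => [|n] //=; lia.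
Qed.

Lemma sum_subset_le (X : finType) (A B : {set X}) (F : X -> nat) :
  A \subset B -> (\sum_(x in A) F x <= \sum_(x in B) F x)%N.
Proof.
move=> AB; rewrite [X in (_ <= X)%N](bigID (mem A)) /=.
apply: leq_trans (leq_addr _ _); rewrite leq_eqVlt; apply/orP; left; apply/eqP.
by apply: eq_bigl => x; rewrite andbC; case xA: (x \in A) => //=; rewrite (subsetP AB).
Qed.

Lemma in_nbhd (T : finType) (E : {set {set T}}) f g :
  g \in nbhd E f = [&& g \in E, g != f & g :&: f != set0].
Proof. by rewrite /nbhd inE. Qed.

Section Core.
Variables (T : finType) (E C : {set {set T}}).
Hypothesis lin : linear_hg E.
Hypothesis CE : C \subset E.

Lemma nbsum (f : {set T}) : f \in E ->
  (\sum_(g in nbhd E f :&: C) #|g| <= #|f| * #|T| + #|nbhd E f :&: C|)%N.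
Proof.
move=> fE; have SE : nbhd E f :&: C \subset E.
  by apply/subsetP => g; rewrite in_setI in_nbhd => /andP [/andP [] ].
apply: (@leq_trans (\sum_(g in nbhd E f :&: C) (1 + #|g :\: f|))).
  apply: leq_sum => g; rewrite in_setI in_nbhd => /andP [/and3P [gE gf _] _].
  rewrite -(cardsID f g) leq_add2r.
  exact: lin gE fE gf.
rewrite big_split /= sum1_card addnC leq_add2r.
apply: (sumA lin SE).
by move=> g; rewrite in_setI in_nbhd => /andP [/and3P []].
Qed.

Definition cW (W : {set {set T}}) (u : T) := (\sum_(g in W | u \in g) #|g :\ u|)%N.

Lemma cardD1m (g : {set T}) u : u \in g -> #|g :\ u| = #|g|.-1.
Proof. by move=> ug; rewrite (cardsD1 u g) ug. Qed.

Lemma sum_cW (W : {set {set T}}) : (\sum_u cW W u = \sum_(g in W) 'C(#|g|, 2) * 2)%N.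
Proof.
rewrite /cW (exchange_big_dep (mem W)) /=; last by move=> u g _ /andP [].
apply: eq_bigr => g gW; rewrite bin2x2.
rewrite (eq_bigl (mem g)); last by move=> u; rewrite /= gW.
rewrite (eq_bigr (fun _ => #|g|.-1)); last by move=> u; exact: cardD1m.
by rewrite sum_nat_const.
Qed.

Lemma cW_le (W : {set {set T}}) u : W \subset E -> (cW W u <= #|T|)%N.
Proof. by move=> WE; exact: (star lin u WE). Qed.

Lemma sum_cW_f (W : {set {set T}}) (f : {set T}) : W \subset E ->
  (\sum_(g in nbhd E f :&: W) #|g|.-1 <= \sum_(u in f) cW W u)%N.
Proof.
move=> WE; rewrite /cW (exchange_big_dep (mem W)) /=; last by move=> u g _ /andP [].
apply: leq_trans (sum_subset_le _ (subsetIr (nbhd E f) W)).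
apply: leq_sum => g; rewrite in_setI in_nbhd => /andP [/and3P [_ _ /set0Pn [u]]].
rewrite inE => /andP [ug uf] gW.
by rewrite (bigD1 u) /= ?uf ?gW ?ug // cardD1m // leq_addr.
Qed.

Lemma N3 (W M : {set {set T}}) (estar : {set T}) : W \subset E ->
  M \subset nbhd E estar -> estar \in E ->
  (\sum_(f in M) \sum_(u in f) cW W u <= #|estar| * \sum_u cW W u + #|T| * #|M|)%N.
Proof.
move=> WE ME eE.
have ME' : M \subset E.
  by apply/subsetP => f /(subsetP ME); rewrite in_nbhd => /and3P [].
under eq_bigr => f _ do rewrite (bigID (mem estar)) /=.
rewrite big_split /= [X in (_ <= X)%N]addnC; apply: leq_add.
  rewrite mulnC -sum_nat_const; apply: leq_sum => f fM.
  apply: (@leq_trans (\sum_(u in f :&: estar) #|T|)).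
    rewrite [X in (_ <= X)%N](eq_bigl (fun u => (u \in f) && (u \in estar))).
      by apply: leq_sum => u _; exact: cW_le.
    by move=> u; rewrite inE.
  rewrite sum_nat_const; move: (subsetP ME f fM); rewrite in_nbhd => /and3P [fE fe _].
  by rewrite -[X in (_ <= X)%N]mul1n leq_mul2r (lin fE eE fe) orbT.
rewrite (exchange_big_dep xpredT) //= big_distrr /=; apply: leq_sum => u _.
have -> : (\sum_(i in M | (u \in i) && (u \notin estar)) cW W u =
    #|[set i in M | (u \in i) && (u \notin estar)]| * cW W u)%N.
  by rewrite -sum_nat_const; apply: eq_bigl => i; rewrite inE.
rewrite leq_mul2r; apply/orP; right.
case ue: (u \in estar).
  by rewrite (_ : [set _ in _ | _] = set0) ?cards0 //; apply/setP => i; rewrite !inE !andbF.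
apply: leq_trans (Pcount lin ME' (negbT ue)); apply: subset_leq_card.
apply/subsetP => g; rewrite !inE => /andP [gM /andP [ug _]]; rewrite gM ug andbT /=.
by move: (subsetP ME g gM); rewrite in_nbhd => /and3P [].
Qed.
End Core.

Local Open Scope ring_scope.

Section RealPart.
Variables (R : realType) (T : finType).

Lemma split_lb (X : {set {set T}}) (lo c : R) :
  (forall g, g \in X -> lo <= (#|g|)%:R) ->
  lo * (#|X :&: [set g : {set T} | (#|g|)%:R <= c]|)%:R
   + c * (#|X :\: [set g : {set T} | (#|g|)%:R <= c]|)%:R
  <= \sum_(g in X) (#|g|)%:R.
Proof.
move=> Hlo; rewrite (big_setID [set g : {set T} | (#|g|)%:R <= c]) /=.
apply: lerD.
  rewrite mulrC mulr_natl -sumr_const; apply: ler_sum => g.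
  by rewrite inE => /andP [gX _]; exact: Hlo.
rewrite mulrC mulr_natl -sumr_const; apply: ler_sum => g.
by rewrite !inE => /andP [/negP H _]; rewrite leNgt; apply/negP => /ltW H'; apply: H.
Qed.


Lemma core_real (E C : {set {set T}}) (estar : {set T}) (tau gam del beta alpha : R) :
  linear_hg E -> C \subset E -> estar \in C -> (forall w, w \in C -> (#|estar| <= #|w|)%N) ->
  (forall f, f \in C -> (1 - tau) * (#|T|)%:R < (#|nbhd E f :&: C|)%:R) ->
  0 < gam -> 0 < del -> 0 <= tau -> tau <= 1 -> (1 <= #|estar|)%N ->
  beta * (gam * (#|estar|)%:R) = (1 - tau) * gam * (#|estar|)%:R - tau * (#|estar|)%:R - 1 ->
  alpha * (del * (#|estar|)%:R) =
     (1 - tau) * del * (#|estar|)%:R - tau * (#|estar|)%:R - gam * (#|estar|)%:R - 1 ->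
  0 <= beta -> 0 <= alpha * ((#|estar|)%:R - 1) - 1 ->
  (#|T|)%:R ^+ 2 * beta * (alpha * ((#|estar|)%:R - 1) - 1) <=
  (#|estar|)%:R * \sum_u (cW (C :&: [set g : {set T} | (#|g|)%:R <= (1 + del) * (#|estar|)%:R]) u)%:R.
Proof.
move=> lin CE eC emin Hdeg gam0 del0 tau0 tau1 k1 Hbeta Halpha beta0 ak.
set k : R := (#|estar|)%:R; set n : R := (#|T|)%:R.
set Bd := [set g : {set T} | (#|g|)%:R <= (1 + del) * k].
set W := C :&: Bd.
set Bg := [set g : {set T} | (#|g|)%:R <= (1 + gam) * k].
set NCe := nbhd E estar :&: C.
set M := NCe :&: Bg.
have k1R : 1 <= k by rewrite /k (ler_nat R 1).
have n0 : 0 <= n by rewrite /n ler0n.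
have eE : estar \in E by exact: (subsetP CE).
have WE : W \subset E by apply: subset_trans (subsetIl _ _) CE.
have lowC : forall g, g \in nbhd E estar :&: C -> k <= (#|g|)%:R.
  by move=> g; rewrite inE => /andP [_ gC]; rewrite ler_nat emin.
have HM : n * beta <= (#|M|)%:R.
  have h1 := nbsum C lin eE.
  have h1R : \sum_(g in NCe) (#|g|)%:R <= k * n + (#|NCe|)%:R :> R.
    by rewrite -natr_sum -natrM -natrD ler_nat.
  have h2 := split_lb ((1 + gam) * k) lowC.
  have h3 := cardsID Bg NCe.
  have h3R : (#|M|)%:R + (#|NCe :\: Bg|)%:R = (#|NCe|)%:R :> R by rewrite -natrD h3.
  have h4 := Hdeg _ eC.
  set m := (#|NCe|)%:R in h1R h3R h4.
  set a := (#|M|)%:R in h2 h3R *.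
  set b := (#|NCe :\: Bg|)%:R in h2 h3R.
  have gk0 : 0 < gam * k by apply: mulr_gt0 => //; lra.
  suff : n * beta * (gam * k) <= a * (gam * k) by rewrite ler_pM2r.
  rewrite -mulrA Hbeta.
  have b0 : 0 <= b by rewrite /b ler0n.
  have p1 : 0 <= (m - (1 - tau) * n) * ((1 + gam) * k - 1).
    apply: mulr_ge0; first lra.
    have : 0 <= gam * k by apply: ltW.
    lra.
  have p2 : 0 <= n * tau by apply: mulr_ge0.
  have eb : b = m - a by lra.
  rewrite eb in h2.
  nra.
have HW : forall f, f \in M -> n * alpha <= (#|nbhd E f :&: W|)%:R.
  move=> f; rewrite !inE => /andP [/andP [fn fC] fB].
  have fE : f \in E by exact: (subsetP CE).
  set A := nbhd E f :&: C.
  have -> : nbhd E f :&: W = A :&: Bd by rewrite /A /W setIA.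
  have lowA : forall g, g \in A -> k <= (#|g|)%:R.
    by move=> g; rewrite inE => /andP [_ gC]; rewrite ler_nat emin.
  have h1 := nbsum C lin fE.
  have h1R : \sum_(g in A) (#|g|)%:R <= (#|f|)%:R * n + (#|A|)%:R :> R.
    by rewrite -natr_sum -natrM -natrD ler_nat.
  have h2 := split_lb ((1 + del) * k) lowA.
  have h3R : (#|A :&: Bd|)%:R + (#|A :\: Bd|)%:R = (#|A|)%:R :> R
    by rewrite -natrD cardsID.
  have h4 := Hdeg _ fC.
  set D := (#|A|)%:R in h1R h3R h4.
  set a := (#|A :&: Bd|)%:R in h2 h3R *.
  set b := (#|A :\: Bd|)%:R in h2 h3R.
  set F := (#|f|)%:R in h1R fB.
  have dk0 : 0 < del * k by apply: mulr_gt0 => //; lra.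
  suff : n * alpha * (del * k) <= a * (del * k) by rewrite ler_pM2r.
  rewrite -mulrA Halpha.
  have p1 : 0 <= (D - (1 - tau) * n) * ((1 + del) * k - 1).
    apply: mulr_ge0; first lra.
    have : 0 <= del * k by apply: ltW.
    lra.
  have p2 : 0 <= n * tau by apply: mulr_ge0.
  have p3 : F * n <= (1 + gam) * k * n by apply: ler_wpM2r.
  have eb : b = D - a by lra.
  rewrite eb in h2.
  nra.
have HSf : forall f, f \in M ->
    (#|nbhd E f :&: W|)%:R * (k - 1) <= (\sum_(u in f) cW W u)%:R :> R.
  move=> f fM; have h := sum_cW_f f WE.
  have h' : (#|nbhd E f :&: W| * #|estar|.-1 <= \sum_(u in f) cW W u)%N.
    apply: leq_trans h; rewrite -sum_nat_const; apply: leq_sum => g.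
    rewrite !inE => /andP [_ /andP [gC _]].
    by rewrite -!subn1 leq_sub2r // emin.
  have := h'; rewrite -(ler_nat R) natrM -subn1 natrB //.
have MN : M \subset nbhd E estar by apply/subsetP => f; rewrite !inE => /andP [/andP [-> _] _].
have H3 := N3 lin WE MN eE.
have H3R : \sum_(f in M) (\sum_(u in f) cW W u)%:R <=
    k * (\sum_u cW W u)%:R + n * (#|M|)%:R :> R.
  by rewrite -natr_sum -!natrM -natrD ler_nat.
have H4 : (#|M|)%:R * (n * alpha * (k - 1)) <= \sum_(f in M) (\sum_(u in f) cW W u)%:R :> R.
  rewrite mulr_natl -sumr_const; apply: ler_sum => f fM.
  apply: le_trans (HSf f fM); apply: ler_wpM2r; first lra.
  exact: HW.
rewrite -natr_sum.
set S := (\sum_u cW W u)%:R in H3R *.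
set Mn := (#|M|)%:R in HM H3R H4.
have p1 : 0 <= (Mn - n * beta) * (n * (alpha * (k - 1) - 1)).
  apply: mulr_ge0; first lra.
  by apply: mulr_ge0.
nra.
Qed.

End RealPart.

Lemma params (R : realType) (e K k : R) : 0 < e -> e <= 1 -> 1 <= K ->
  2 * K <= k * e ^+ 4 ->
  exists beta alpha : R, [/\
    beta * (e ^+ 3 * K * k) = (1 - e ^+ 4) * (e ^+ 3 * K) * k - e ^+ 4 * k - 1,
    alpha * (3 * e * K ^+ 4 * k) =
      (1 - e ^+ 4) * (3 * e * K ^+ 4) * k - e ^+ 4 * k - e ^+ 3 * K * k - 1,
    1 - e ^+ 4 - 7 * (e / K) <= beta &
    k * (1 - e ^+ 4 - 7 * (e / K)) <= alpha * (k - 1) - 1].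
Proof.
move=> e0 e1 K1 Hk.
set t := e ^+ 4; set g := e ^+ 3 * K; set d := 3 * e * K ^+ 4; set u := e / K.
have K0 : 0 < K by lra.
have Hk2 : 2 * K <= k * t by exact: Hk.
have t0 : 0 < t by rewrite /t exprn_gt0.
have e2 : e ^+ 2 <= 1 by apply: exprn_ile1 => //; lra.
have e3 : e ^+ 3 <= 1 by rewrite exprS; nra.
have te : t <= e.
  rewrite /t exprS; have : 0 <= e ^+ 3 by rewrite exprn_ge0 //; lra.
  nra.
have te2 : t <= e ^+ 2.
  rewrite /t (_ : 4 = 2 + 2)%N // exprD; have : 0 <= e ^+ 2 by rewrite exprn_ge0 //; lra.
  nra.
have k0 : 0 < k.
  have : 0 < k * t by lra.
  by rewrite pmulr_lgt0.
have uK : u * K = e by rewrite /u divfK //; lra.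
have u0 : 0 < u by rewrite /u divr_gt0.
have g0 : 0 < g by rewrite /g mulr_gt0 // exprn_gt0.
have d0 : 0 < d by rewrite /d !mulr_gt0 // exprn_gt0.
have gk0 : g * k != 0 by rewrite mulf_neq0 // gt_eqF.
have dk0 : d * k != 0 by rewrite mulf_neq0 // gt_eqF.
have d0' : d != 0 by rewrite gt_eqF.
set p := (t * k + 1) / (g * k).
set q := (t + g) / d.
set r := 1 / (d * k).
have Hp : p * (g * k) = t * k + 1 by rewrite /p divfK.
have Hq : q * d = t + g by rewrite /q divfK.
have Hr : r * (d * k) = 1 by rewrite /r divfK.
exists (1 - t - p), (1 - t - q - r); split.
- have -> : (1 - t - p) * (g * k) = (1 - t) * g * k - p * (g * k) by ring.
  rewrite Hp; ring.
- have -> : (1 - t - q - r) * (d * k) = (1 - t) * d * k - (q * d) * k - r * (d * k) by ring.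
  rewrite Hq Hr; ring.
- have H : (7 * u - p) * (g * k) = 6 * t * k - 1.
    have -> : (7 * u - p) * (g * k) = 7 * (u * K) * e ^+ 3 * k - p * (g * k) by rewrite /g; ring.
    by rewrite Hp uK /t; ring.
  have : 0 <= 7 * u - p.
    have : 0 <= (7 * u - p) * (g * k) by rewrite H; nra.
    by rewrite pmulr_lge0 // mulr_gt0.
  lra.
-
  have ud : u * d = 3 * e ^+ 2 * K ^+ 3.
    have -> : u * d = 3 * e * (u * K) * K ^+ 3 by rewrite /d; ring.
    by rewrite uK; ring.
  have hq : q <= 2 * u.
    have H : (2 * u - q) * d = 6 * e ^+ 2 * K ^+ 3 - t - g.
      have -> : (2 * u - q) * d = 2 * (u * d) - q * d by ring.
      by rewrite ud Hq; ring.
    have K3 : 1 <= K ^+ 3 by apply: exprn_ege1.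
    have : 0 <= (2 * u - q) * d.
      rewrite H /g.
      have h1 : t <= e ^+ 2 * K ^+ 3 by nra.
      have h2 : e ^+ 3 * K <= e ^+ 2 * K ^+ 3.
        rewrite exprS (mulrC e) -mulrA; apply: ler_wpM2l; first by rewrite exprn_ge0 //; lra.
        have : K <= K ^+ 3 by nra.
        nra.
      lra.
    by rewrite pmulr_lge0 //; lra.
  have uk2 : 2 <= u * k.
    have : 2 * K <= u * k * K.
      have -> : u * k * K = k * e by rewrite -uK; ring.
      have : k * t <= k * e by apply: ler_wpM2l => //; lra.
      lra.
    by move=> H; rewrite -(ler_pM2r K0); lra.
  have hr : r * k <= u * k.
    have : 1 <= u * k * d by nra.
    move=> H1; have : r * k * d = 1 by rewrite -Hr; ring.
    move=> H2; have : r * k * d <= u * k * d by lra.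
    by rewrite ler_pM2r.
  have q0 : 0 <= q by rewrite /q divr_ge0 //; lra.
  have r0 : 0 <= r by rewrite /r divr_ge0 //; nra.
  have t1 : t <= 1 by lra.
  nra.
Qed.

Lemma peel (R : realType) (T : finType) (E : {set {set T}}) (B : R) (D : {set {set T}}) :
  exists (C : {set {set T}}) (t : seq {set T}), [/\ C \subset D, uniq t, t =i D :\: C,
    (forall e, e \in t ->
      (#|[set f in nbhd E e | (f \in C) || ((f \in t) && (index f t <= index e t)%N)]|)%:R <= B)
    & (C = set0 \/ forall f, f \in C -> B < (#|nbhd E f :&: C|)%:R)].
Proof.
move: {2}#|D| (leqnn #|D|) => n; elim: n D => [|n IH] D Dn;
  case: (boolP [forall f in D, B < (#|nbhd E f :&: D|)%:R]) => HD.
- exists D, [::]; split => //; first by move=> x; rewrite setDv inE.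
  by right => f fD; move/forall_inP: HD; apply.
- move/forall_inPn: HD => [f fD _]; move: Dn; rewrite leqn0 => /eqP/cards0_eq D0.
  by rewrite D0 inE in fD.
- exists D, [::]; split => //; first by move=> x; rewrite setDv inE.
  by right => f fD; move/forall_inP: HD; apply.
- move/forall_inPn: HD => [f fD Hf].
  have Dfn : (#|D :\ f| <= n)%N.
    by move: Dn; rewrite (cardsD1 f D) fD add1n ltnS.
  have [C [t [CD ut tD Ht HC]]] := IH _ Dfn.
  have ft : f \notin t by rewrite tD !inE eqxx /= andbF.
  have fC : f \notin C by apply/negP => /(subsetP CD); rewrite !inE eqxx.
  exists C, (rcons t f); split => //.
  + by apply: subset_trans CD (subsetDl _ _).
  + by rewrite rcons_uniq ft ut.
  + move=> x; rewrite mem_rcons in_cons tD !inE.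
    by case: eqP => [->|_] //=; rewrite fC fD.
  + move=> e; rewrite mem_rcons in_cons => /orP [/eqP ->|et].
      apply: le_trans (_ : (#|nbhd E f :&: D|)%:R <= B); last by rewrite leNgt.
      rewrite ler_nat; apply: subset_leq_card; apply/subsetP => g.
      rewrite !inE => /andP [gn /orP [gC|/andP [gt _]]]; rewrite gn /=.
        by move: (subsetP CD g gC); rewrite inE => /andP [].
      move: gt; rewrite mem_rcons in_cons => /orP [/eqP -> //|].
      by rewrite tD !inE => /andP [_ /andP [_ ->]].
    have -> : [set g in nbhd E e | (g \in C) ||
        ((g \in rcons t f) && (index g (rcons t f) <= index e (rcons t f))%N)] =
        [set g in nbhd E e | (g \in C) || ((g \in t) && (index g t <= index e t)%N)].
      apply/setP => g; rewrite !inE; congr (_ && (_ || _)).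
      rewrite -cats1 mem_cat !index_cat et inE.
      case gt: (g \in t) => //=.
      case: eqP => [->|] //=; rewrite eqxx addn0; apply/negbTE; rewrite -ltnNge.
      by rewrite index_mem.
    exact: Ht.
Qed.

End Helpers.
Import Helpers.
Local Open Scope ring_scope.

Theorem lemma6p2 (R : realType) (tau K : R) :
  0 < tau -> tau < 1 -> 1 <= K ->
  0 < 1 - tau - 7 * Num.sqrt (Num.sqrt tau) / K ->
  exists r0 : nat, forall r1 : nat, (r0 <= r1)%N ->
  forall (T : finType) (E : {set {set T}}),
    hypergraph E -> linear_hg E ->
    (forall e, e \in E -> (r1 <= #|e|)%N) ->
    let n := #|T| in
    exists s : seq {set T}, edge_ordering E s /\
      ((forall e, e \in E -> (dprec E s e)%:R <= (1 - tau) * n%:R :> R)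
       \/
       exists (W : {set {set T}}) (estar : {set T}),
         [/\ W \subset E, estar \in W,
             (forall w, w \in W -> preceq s w estar) &
           [/\
             (forall e f, e \in W -> f \in W ->
                #|e|%:R <= (1 + 3 * Num.sqrt (Num.sqrt tau) * K ^+ 4) * #|f|%:R :> R),
             vol R W >= (1 - tau - 7 * Num.sqrt (Num.sqrt tau) / K) ^+ 2
                        / (1 + 3 * Num.sqrt (Num.sqrt tau) * K ^+ 4),
             (forall f, f \in E -> preceq s estar f -> f != estar ->
                (dprec E s f)%:R <= (1 - tau) * n%:R :> R) &
             (forall e f, e \in E -> f \in E -> preceq s f e -> preceq s e estar ->
                (#|e| <= #|f|)%N)]]).
Proof.
move=> tau0 tau1 K1 L0.
set e := Num.sqrt (Num.sqrt tau).
have e0 : 0 < e by rewrite /e !sqrtr_gt0.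
have e4 : e ^+ 4 = tau.
  by rewrite (_ : 4 = 2 * 2)%N // exprM sqr_sqrtr ?sqr_sqrtr // ?sqrtr_ge0 // ltW.
have e1 : e <= 1.
  have : e ^+ 4 <= 1 by rewrite e4 ltW.
  by rewrite expr_le1 // ltW.
have K0 : 0 < K by lra.
exists (Num.Def.archi_bound (2 * K / tau)) => r1 r0r1 T E hyp lin Hsize n.
have Hb : 2 * K / tau < (Num.Def.archi_bound (2 * K / tau))%:R.
  by apply: archi_boundP; rewrite divr_ge0 //; lra.
have Hr1 : 2 * K < r1%:R * tau.
  rewrite -ltr_pdivrMr //; apply: lt_le_trans Hb _; by rewrite ler_nat.
set B := (1 - tau) * n%:R.
have [C [t [CE ut tD Ht HC]]] := peel E B E.
have Ha : C = set0 -> exists s : seq {set T}, edge_ordering E s /\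
      (forall e, e \in E -> (dprec E s e)%:R <= B).
  move=> C0; exists t; split.
    by split => // x; rewrite tD C0 setD0.
  move=> x xE; have xt : x \in t by rewrite tD C0 setD0.
  apply: le_trans (Ht x xt); rewrite ler_nat; apply: subset_leq_card.
  apply/subsetP => g; rewrite inE => /andP [gn Hp]; rewrite inE gn /= C0 inE /=.
  rewrite tD C0 setD0; move: Hp; rewrite /preceq => ->; rewrite andbT; move: gn; rewrite in_nbhd => /and3P [] //.
have [C0|[x0 x0C]] := set_0Vmem C.
  by have [s [so Hs]] := Ha C0; exists s; split => //; left.
have {}Hcore : forall f, f \in C -> B < (#|nbhd E f :&: C|)%:R.
  by case: HC => // C0; rewrite C0 inE in x0C.
pose leT := fun a b : {set T} => (#|b| <= #|a|)%N.
have leT_tot : total leT by move=> a b; rewrite /leT leq_total.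
have leT_tr : transitive leT by move=> a b c; rewrite /leT => h1 h2; apply: leq_trans h2 h1.
have leT_refl : reflexive leT by move=> a; rewrite /leT.
set c := sort leT (enum C).
have c_sorted : sorted leT c := sort_sorted leT_tot _.
have uc : uniq c by rewrite sort_uniq enum_uniq.
have memc : forall x, (x \in c) = (x \in C) by move=> x; rewrite mem_sort mem_enum.
have szc : (0 < size c)%N by rewrite size_sort -cardE card_gt0; apply/set0Pn; exists x0.
set estar := nth set0 c (size c).-1.
have szc1 : ((size c).-1 < size c)%N by rewrite prednK.
have ec : estar \in c by rewrite mem_nth.
have eC : estar \in C by rewrite -memc.
have ie : index estar c = (size c).-1 by rewrite index_uniq.
have mono : forall i j, (i <= j)%N -> (j < size c)%N -> (#|nth set0 c j| <= #|nth set0 c i|)%N.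
  move=> i j ij jc.
  by apply: (sorted_leq_nth leT_tr leT_refl set0 c_sorted) => //; rewrite inE; apply: leq_ltn_trans ij jc.
have emin : forall w, w \in C -> (#|estar| <= #|w|)%N.
  move=> w; rewrite -memc => wc.
  have := mono (index w c) (size c).-1; rewrite nth_index //; apply => //.
  by rewrite -ltnS prednK // index_mem.
set s := c ++ t.
have ids : forall x, x \in c -> index x s = index x c by move=> x xc; rewrite index_cat xc.
have idt : forall x, x \notin c -> index x s = (size c + index x t)%N.
  by move=> x xc; rewrite index_cat (negbTE xc).
exists s; split.
  split.
    rewrite cat_uniq uc ut /= andbT; apply/hasPn => x; rewrite tD !inE memc.
    by case/andP.
  by move=> x; rewrite mem_cat memc tD !inE; case xC: (x \in C) => //=; rewrite (subsetP CE).
right.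
have eE : estar \in E by rewrite (subsetP CE).
set k := #|estar|.
set d := 3 * e * K ^+ 4.
have d0 : 0 < d by rewrite /d !mulr_gt0 // exprn_gt0.
set W := C :&: [set g : {set T} | (#|g|)%:R <= (1 + d) * (k%:R)].
have Hk : 2 * K < k%:R * tau.
  apply: lt_le_trans Hr1 _; apply: ler_wpM2r; first exact: ltW.
  by rewrite ler_nat Hsize.
have kpos : 0 < k%:R :> R.
  have : 0 < k%:R * tau by lra.
  by rewrite pmulr_lgt0.
have WC : W \subset C by exact: subsetIl.
have inc : forall x, x \in c -> (index x s <= index estar s)%N.
  by move=> x xc; rewrite !ids // ie -ltnS prednK // index_mem.
exists W, estar; split.
- exact: subset_trans WC CE.
- rewrite !inE eC /=; nra.
- by move=> w wW; rewrite /preceq inc // memc (subsetP WC).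
split.
- move=> x y; rewrite !inE => /andP [_ xb] /andP [yC _].
  apply: le_trans xb _; apply: ler_wpM2l; first lra.
  by rewrite ler_nat emin.
- have Hk' : 2 * K <= k%:R * e ^+ 4 by rewrite e4; exact: ltW.
  have [beta [alpha [Hb1 Ha1 HbL HaL]]] := params e0 e1 K1 Hk'.
  rewrite e4 in Hb1 Ha1 HbL HaL.
  have L7 : 7 * e / K = 7 * (e / K) by rewrite mulrA.
  rewrite L7 in L0 *.
  set L := 1 - tau - 7 * (e / K) in L0 HbL HaL *.
  have gam0 : 0 < e ^+ 3 * K by rewrite mulr_gt0 // exprn_gt0.
  have k1 : (1 <= k)%N by rewrite -(ltr_nat R).
  have core := core_real lin CE eC emin Hcore gam0 d0 (ltW tau0) (ltW tau1) k1 Hb1 Ha1.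
  have kL0 : 0 <= k%:R * L by apply: mulr_ge0; lra.
  have := core (le_trans (ltW L0) HbL) (le_trans kL0 HaL).
  rewrite -/W -natr_sum sum_cW natr_sum.
  under eq_bigr do rewrite natrM.
  rewrite -big_distrl /=.
  rewrite /vol.
  set S2 := \sum_(i in W) ('C(#|i|, 2))%:R.
  set Cn := ('C(#|T|, 2))%:R : R.
  move=> core2.
  have k3 : (2 < k)%N.
    rewrite -(ltr_nat R); have : 2 < k%:R * tau by lra.
    move=> H; have : k%:R * tau < k%:R by rewrite gtr_pMr.
    lra.
  have kn : (k <= #|T|)%N by exact: max_card.
  have Cn0 : 0 < Cn by rewrite /Cn ltr0n bin_gt0; apply: leq_trans kn; apply: ltnW.
  have HCn : Cn * 2 <= (#|T|)%:R ^+ 2.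
    rewrite /Cn -natrM bin2x2 -natrX ler_nat expnS expn1 leq_mul2l leq_pred orbT //.
  rewrite ler_pdivlMr //.
  have h1 : L * (k%:R * L) <= beta * (alpha * (k%:R - 1) - 1) by apply: ler_pM => //; lra.
  have n20 : 0 <= (#|T|)%:R ^+ 2 :> R by rewrite exprn_ge0.
  have h1' : (#|T|)%:R ^+ 2 * (L * (k%:R * L)) <= (#|T|)%:R ^+ 2 * beta * (alpha * (k%:R - 1) - 1).
    by rewrite -mulrA; apply: ler_wpM2l.
  have h2 : (#|T|)%:R ^+ 2 * L ^+ 2 <= S2 * 2.
    have : k%:R * ((#|T|)%:R ^+ 2 * L ^+ 2) <= k%:R * (S2 * 2).
      apply: le_trans (le_trans h1' core2); rewrite le_eqVlt; apply/orP; left; apply/eqP; ring.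
    by rewrite ler_pM2l.
  have L2 : 0 <= L ^+ 2 by rewrite exprn_ge0 // ltW.
  have h3 : Cn * L ^+ 2 <= S2.
    have : Cn * 2 * L ^+ 2 <= (#|T|)%:R ^+ 2 * L ^+ 2 by apply: ler_wpM2r.
    lra.
  have h4 : L ^+ 2 / (1 + d) <= L ^+ 2.
    by rewrite ler_pdivrMr; [nra | lra].
  apply: le_trans h3; rewrite mulrC; apply: ler_wpM2l; lra.
- move=> f fE; rewrite /preceq => Hp fne.
  have fc : f \notin c.
    apply/negP => fc; move: Hp; rewrite !ids // ie => Hp.
    have : index f c = (size c).-1.
      apply/eqP; rewrite eqn_leq Hp andbT -ltnS prednK // index_mem //.
    by move=> H; move/eqP: fne; apply; rewrite -(nth_index set0 fc) H.
  have ft : f \in t by rewrite tD !inE fE -memc fc.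
  apply: le_trans (Ht f ft); rewrite ler_nat; apply: subset_leq_card.
  apply/subsetP => g; rewrite inE => /andP [gn Hg]; rewrite inE gn /=.
  case gc: (g \in C) => //=.
  have gc' : g \notin c by rewrite memc gc.
  have gt : g \in t.
    by rewrite tD !inE gc /=; move: gn; rewrite in_nbhd => /and3P [].
  by move: Hg; rewrite /preceq gt !idt // leq_add2l.
- move=> x y xE yE; rewrite /preceq => Hyx Hxe.
  have xc : x \in c.
    apply/negP => /negP xc; move: Hxe; rewrite idt // ids // ie.
    by rewrite leqNgt -ltnS prednK // ltnS leq_addr.
  have yc : y \in c.
    apply/negP => /negP yc; move: Hyx; rewrite idt // ids //.
    by rewrite leqNgt ltn_addr // index_mem.
  move: Hyx; rewrite !ids // => Hyx.
  have := mono _ _ Hyx; rewrite !nth_index //; apply.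
  by rewrite index_mem.
Qed.
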